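(* Let $t, b \ge 1$ be integers and $T$ a finite non-empty subset of $\mathbb{Z}^b$. Let $S$ be a set and let $\mathcal{F}$ be a family consisting of at least $(t-1)|T|^2$ pairwise disjoint subsets of $S$. Then there is a set $X \subset \mathbb{Z}^b \times S$ satisfying: (1) $X$ is a union of pairwise disjoint sets of the form $(T+x)\times A$ with $x \in \mathbb{Z}^b$ and $A \in \mathcal{F}$; and (2) for each $x \in \mathbb{Z}^b$ there is some $m \equiv 1 \pmod t$ such that $\{y \in S : (x,y) \in X\}$ is a union of $m$ distinct members of $\mathcal{F}$. *)

(* Defs.v *)
From HB Require Import structures.
From mathcomp Require Import all_boot all_order all_algebra finmap.
From mathcomp Require Import boolp classical_sets.
Set Implicit Arguments. Unset Strict Implicit. Unset Printing Implicit Defensive.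
Import GRing.Theory Num.Theory.
Local Open Scope ring_scope.
Local Open Scope classical_set_scope.

Definition translate (b : nat) (T : {fset 'rV[int]_b}) (x : 'rV[int]_b)
  : set 'rV[int]_b := [set y + x | y in [set` T]].

Definition pw_disjoint (U : Type) (F : set (set U)) : Prop :=
  forall A B, F A -> F B -> A <> B -> A `&` B = set0.

(* Main.v *)
Require Import Defs.
From HB Require Import structures.
From mathcomp Require Import all_boot all_order all_algebra finmap.
From mathcomp Require Import boolp classical_sets.
Import GRing.Theory Num.Theory.
Local Open Scope ring_scope.
Local Open Scope classical_set_scope.
From mathcomp Require Import zify ring lra.

Module Helpers.
Set Implicit Arguments. Unset Strict Implicit. Unset Printing Implicit Defensive.
Import Order.TTheory GRing.Theory Num.Theory.
Local Close Scope ring_scope.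
Local Close Scope classical_set_scope.
Section Part1.

Section SR.
Variable F : nat -> (nat -> nat) -> nat.
Hypothesis Fext : forall n f g, (forall j, j < n -> f j = g j) -> F n f = F n g.

Fixpoint build n : seq nat := match n with
  | 0 => [::]
  | n'.+1 => rcons (build n') (F n' (fun j => nth 0 (build n') j)) end.
Definition sr n := nth 0 (build n.+1) n.

Lemma size_build n : size (build n) = n.
Proof. by elim: n => //= n IH; rewrite size_rcons IH. Qed.

Lemma nth_build m j : j < m -> nth 0 (build m) j = sr j.
Proof.
elim: m => // m IH; rewrite ltnS leq_eqVlt => /orP [/eqP -> //| ltjm].
by rewrite /= nth_rcons size_build ltjm IH.
Qed.

Lemma srE n : sr n = F n sr.
Proof.
rewrite /sr /= nth_rcons size_build ltnn eqxx; apply: Fext => j; exact: nth_build.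
Qed.
End SR.

Lemma greedy_nat (K : nat) (nb : nat -> seq nat) :
  (forall v, size (nb v) < K) ->
  exists c : nat -> nat, (forall v, c v < K) /\
    forall v w, w \in nb v -> w < v -> c v != c w.
Proof.
move=> Hs.
pose L v (f : nat -> nat) := [seq f w | w <- nb v & w < v].
pose F v f := head 0 [seq k <- iota 0 K | k \notin L v f].
have Fext : forall n f g, (forall j, j < n -> f j = g j) -> F n f = F n g.
  move=> n f g H; rewrite /F.
  have -> : L n f = L n g.
    by apply/eq_in_map => w; rewrite mem_filter => /andP [? _]; exact: H.
  by [].
have Hin : forall v f, F v f \in [seq k <- iota 0 K | k \notin L v f].
  move=> v f; rewrite /F; case E: [seq k <- iota 0 K | k \notin L v f] => [|a s] /=.
    exfalso.
    have : size (iota 0 K) <= size (L v f).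
      apply: uniq_leq_size; first exact: iota_uniq.
      move=> k kin; apply: contraT => kn.
      have : k \in [seq k <- iota 0 K | k \notin L v f] by rewrite mem_filter kn kin.
      by rewrite E.
    rewrite size_iota size_map; move: (Hs v) => H1 H2.
    rewrite size_filter in H2.
    have := leq_trans H2 (count_size (fun w => w < v) (nb v)).
    by rewrite leqNgt H1.
  by rewrite inE eqxx.
exists (sr F); split.
  by move=> v; rewrite srE; move: (Hin v (sr F)); rewrite mem_filter mem_iota => /andP [_ ].
move=> v w wn wv; rewrite (srE Fext v); move: (Hin v (sr F)); rewrite mem_filter => /andP [H _].
apply: contra H => /eqP ->; rewrite /L; apply/mapP; exists w => //; by rewrite mem_filter wv.
Qed.

Definition enc (z : int) : nat := match z with Posz m => m.*2 | Negz m => (m.*2).+1 end.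
Definition dec (v : nat) : int := if odd v then Negz (v./2) else Posz (v./2).
Lemma decK : cancel enc dec.
Proof.
case=> m; rewrite /dec /=.
  by rewrite odd_double doubleK.
by rewrite odd_double /= uphalf_double.
Qed.

Local Open Scope ring_scope.

Lemma greedy_int (K : nat) (D : seq int) :
  (count (fun d : int => d != 0) D < K)%N ->
  (forall d, d \in D -> - d \in D) ->
  exists g : int -> nat, (forall i, (g i < K)%N) /\
    forall i j, i - j \in D -> i != j -> g i != g j.
Proof.
move=> HK Hneg.
pose nb v := [seq enc (dec v + d) | d <- D & (d != 0 :> int)].
have [c [cK cP]] : exists c : nat -> nat, (forall v, (c v < K)%N) /\
    forall v w, w \in nb v -> (w < v)%N -> c v != c w.
  by apply: greedy_nat => v; rewrite size_map size_filter.
exists (fun z => c (enc z)); split => // i j Hd Hij.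
have Hne : enc i != enc j by apply: contra Hij => /eqP/(can_inj decK) ->.
case: (ltngtP (enc i) (enc j)) => [lt|lt|eq]; last by rewrite eq eqxx in Hne.
- rewrite eq_sym; apply: cP lt; apply/mapP; exists (i - j).
    by rewrite mem_filter subr_eq0 Hij.
  by rewrite decK addrC subrK.
- apply: cP lt; apply/mapP; exists (j - i).
    by rewrite mem_filter subr_eq0 eq_sym Hij -opprB Hneg.
  by rewrite decK addrC subrK.
Qed.

End Part1.
Section Part2.

Lemma ucore (t : nat) (En : seq nat) : 0 < t -> uniq En -> 0 \in En ->
  exists u : nat -> nat, (forall n, u n < t) /\
    forall n, \sum_(e <- En) (if e <= n then u (n - e) else 0) = 1 %[mod t].
Proof.
move=> t0 Eu E0.
pose F n (f : nat -> nat) := (1 + (t-1) * \sum_(e <- rem 0 En)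
   (if (0 < e) && (e <= n) then f (n - e) else 0)) %% t.
have Fext : forall n f g, (forall j, j < n -> f j = g j) -> F n f = F n g.
  move=> n f g H; rewrite /F; congr (_ %% _); congr (_ + _ * _).
  apply: eq_bigr => e _; case: ifP => // /andP [e0 en]; apply: H.
  by rewrite ltn_subrL e0; lia.
exists (sr F); split.
  by move=> n; rewrite srE // ltn_mod.
move=> n; rewrite (perm_big _ (perm_to_rem E0)) big_cons leq0n subn0.
set S := \sum_(e <- rem 0 En) _.
have -> : S = \sum_(e <- rem 0 En) (if (0 < e) && (e <= n) then sr F (n - e) else 0).
  apply: eq_big_seq => e; rewrite mem_rem_uniq // inE => /andP [e0 _].
  by rewrite lt0n e0.
rewrite srE // /F modnDml.
set S' := \sum_(e <- rem 0 En) _.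
have -> : 1 + (t - 1) * S' + S' = t * S' + 1 by nia.
by rewrite mulnC modnMDl.
Qed.

Local Open Scope ring_scope.

Definition G (u : nat -> nat) (z : int) : nat := if (0 <= z) then u (absz z) else 0%N.

Lemma shiftsum (E : seq int) (phi : int -> int) u z :
  (forall e, e \in E -> 0 <= phi e) ->
  \sum_(e <- E) G u (z - phi e) = if 0 <= z then
    \sum_(e' <- map (fun e => absz (phi e)) E) (if (e' <= absz z)%N then u (absz z - e')%N else 0%N)
    else 0%N.
Proof.
move=> hp; case: ifP => hz.
  rewrite big_map; apply: eq_big_seq => e eE.
  move: (hp e eE); case: (phi e) => // c _; case: z hz => // a _ /=.
  rewrite /G; case: leqP => h.
    by rewrite subzn // lez_nat leq0n.
  have -> : (0 <= a%:Z - c%:Z) = false by apply/negbTE/negP => ?; lia.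
  by [].
rewrite big1_seq // => e /andP [_ eE]; rewrite /G.
have -> : (0 <= z - phi e) = false by move: (hp e eE) => ?; apply/negbTE/negP => ?; lia.
by [].
Qed.

Lemma exists_min (E : seq int) : E != [::] -> exists2 a, a \in E & forall e, e \in E -> a <= e.
Proof.
elim: E => // x s IH _; case: s IH => [|y s] IH.
  by exists x; rewrite ?inE // => e; rewrite inE => /eqP ->.
have [a aE ah] := IH isT.
case: (lerP x a) => hx.
  exists x; first by rewrite inE eqxx.
  move=> e; rewrite inE => /orP [/eqP -> //| /ah]; exact: le_trans.
exists a; first by rewrite inE aE orbT.
move=> e; rewrite inE => /orP [/eqP -> | /ah //]; exact: ltW.
Qed.

Lemma exists_max (E : seq int) : E != [::] -> exists2 a, a \in E & forall e, e \in E -> e <= a.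
Proof.
move=> hE; have [|a aE ah] := @exists_min (map (fun e => - e) E).
  by case: E hE.
exists (- a).
  by move/mapP: aE => [e eE ->]; rewrite opprK.
move=> e eE; rewrite -(opprK e) lerN2; apply: ah; exact: map_f.
Qed.

Lemma absz_nn z : 0 <= z -> (absz z)%:Z = z.
Proof. by case: z. Qed.

Lemma hcore (t : nat) (E : seq int) : (0 < t)%N -> uniq E -> E != [::] ->
  exists h : int -> nat, (forall j, (h j < t)%N) /\
    forall k : int, (\sum_(e <- E) h (k - e)%R = 1 %[mod t])%N.
Proof.
move=> t0 Eu hE.
have [a aE ah] := exists_min hE.
have [a' aE' ah'] := exists_max hE.
have [u1 [_ hu1]] : exists u : nat -> nat, (forall n, (u n < t)%N) /\
    forall n, (\sum_(e <- map (fun e => absz (e - a)) E)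
       (if e <= n then u (n - e) else 0) = 1 %[mod t])%N.
  apply: ucore => //.
    rewrite map_inj_in_uniq // => x y xE yE /(congr1 Posz).
    rewrite !absz_nn ?subr_ge0 ?ah //; exact: subIr.
  by apply/mapP; exists a => //; rewrite subrr.
have [u2 [_ hu2]] : exists u : nat -> nat, (forall n, (u n < t)%N) /\
    forall n, (\sum_(e <- map (fun e => absz (a' - e)) E)
       (if e <= n then u (n - e) else 0) = 1 %[mod t])%N.
  apply: ucore => //.
    rewrite map_inj_in_uniq // => x y xE yE /(congr1 Posz).
    rewrite !absz_nn ?subr_ge0 ?ah' // => ?; lia.
  by apply/mapP; exists a' => //; rewrite subrr.
exists (fun j => (G u1 (j + a) + G u2 (-1 - j - a')) %% t)%N; split.
  by move=> j; rewrite ltn_mod.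
move=> k; rewrite modn_summ big_split /=.
have -> : \sum_(e <- E) G u1 (k - e + a) = \sum_(e <- E) G u1 (k - (e - a)).
  by apply: eq_bigr => e _; congr (G _ _); ring.
have -> : \sum_(e <- E) G u2 (-1 - (k - e) - a') = \sum_(e <- E) G u2 ((-1 - k) - (a' - e)).
  by apply: eq_bigr => e _; congr (G _ _); ring.
rewrite shiftsum; last by move=> e eE; rewrite subr_ge0 ah.
rewrite shiftsum; last by move=> e eE; rewrite subr_ge0 ah'.
case: (lerP 0 k) => hk.
  have -> : (0 <= -1 - k) = false by apply/negbTE/negP => ?; lia.
  by rewrite addn0 hu1.
have -> : (0 <= -1 - k) = true by apply/idP; lia.
by rewrite add0n hu2.
Qed.

End Part2.
Section Part3.
Local Open Scope ring_scope.

Lemma digits (B : int) n (d : 'I_n -> int) : (forall i, `|d i| < B) ->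
  \sum_(i < n) d i * B ^+ i = 0 -> forall i, d i = 0.
Proof.
elim: n d => [d _ _ [] //|n IH d Hd].
rewrite big_ord_recl expr0 mulr1.
set S := \sum_(i < n) _.
have -> : S = B * \sum_(i < n) d (lift ord0 i) * B ^+ i.
  rewrite /S mulr_sumr; apply: eq_bigr => i _; rewrite lift0 exprS; ring.
set S' := \sum_(i < n) _ => H.
have hB := Hd ord0; move: (hB); rewrite ltr_norml => /andP [l1 l2].
have B0 : 0 < B by apply: le_lt_trans hB; exact: normr_ge0.
have S'0 : S' = 0 by nia.
have d0 : d ord0 = 0 by rewrite S'0 mulr0 addr0 in H.
have IH' := IH (fun i => d (lift ord0 i)) (fun i => Hd _) S'0.
move=> i; case: (unliftP ord0 i) => [j -> | -> //]; exact: IH'.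
Qed.

Definition lam (b : nat) (B : int) (x : 'rV[int]_b) : int := \sum_(i < b) x ord0 i * B ^+ i.

Lemma lamB b B (x y : 'rV[int]_b) : lam B (x - y) = lam B x - lam B y.
Proof. rewrite /lam -sumrB; apply: eq_bigr => i _; by rewrite !mxE mulrBl. Qed.
Lemma lamD b B (x y : 'rV[int]_b) : lam B (x + y) = lam B x + lam B y.
Proof. rewrite /lam -big_split; apply: eq_bigr => i _; by rewrite !mxE mulrDl. Qed.

Lemma le_sum_mem (I : eqType) (s : seq I) (F : I -> int) x :
  x \in s -> (forall y, 0 <= F y) -> F x <= \sum_(y <- s) F y.
Proof.
elim: s => // y s IH; rewrite inE big_cons => /orP [/eqP -> | xs] H0.
  by rewrite lerDl sumr_ge0.
apply: le_trans (IH xs H0) _; by rewrite lerDr.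
Qed.

End Part3.
End Helpers.
Import Helpers.
Import Order.TTheory.

Theorem lemma13 (t b : nat) (T : {fset 'rV[int]_b}) (S : Type)
    (F : set (set S)) :
  (0 < t)%N -> (0 < b)%N -> T != fset0 ->
  pw_disjoint F ->
  (* F has at least (t-1)|T|^2 members *)
  (exists g : 'I_((t - 1) * (#|` T| ^ 2)) -> set S,
      injective g /\ forall i, F (g i)) ->
  exists X : set ('rV[int]_b * S),
    (* (1) X is a union of pairwise disjoint sets (T+x) x A, x in Z^b, A in F *)
    (exists Q : set (set ('rV[int]_b * S)),
        (forall B, Q B -> exists x A, F A /\ B = translate T x `*` A) /\
        pw_disjoint Q /\
        X = \bigcup_(B in Q) B) /\
    (* (2) every fibre of X is a union of m distinct members of F, m = 1 mod t *)
    (forall x : 'rV[int]_b, exists m : nat, (m = 1 %[mod t])%N /\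
        exists f : 'I_m -> set S, injective f /\ (forall i, F (f i)) /\
          [set y | X (x, y)] = \bigcup_(i in [set: 'I_m]) f i).
Proof.
move=> t0 b0 Tn0 Fdis [gF [gFi gFF]].
set n := #|` T|.
set Tl := enum_fset T.
pose Bb : int := 1 + \sum_(x <- Tl) \sum_(y <- Tl) \sum_(i < b) `|x ord0 i - y ord0 i|.
pose lm := @lam b Bb.
have lm_inj : {in T &, injective lm}.
  move=> x y xT yT /eqP; rewrite -subr_eq0 -lamB => /eqP H.
  apply/eqP; rewrite -subr_eq0; apply/eqP/rowP => i; rewrite [RHS]mxE.
  apply: (digits (d := fun j => (x - y) ord0 j) _ H) => j; rewrite !mxE.
  rewrite /Bb ltz1D.
  apply: le_trans (le_sum_mem (x := x) _ _) => //; last by move=> z; apply: sumr_ge0 => *; apply: sumr_ge0.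
  apply: le_trans (le_sum_mem (x := y) _ _) => //; last by move=> z; apply: sumr_ge0.
  apply: le_trans (le_sum_mem (x := j) _ _) => //; exact: mem_index_enum.
pose E := map lm Tl.
have Eu : uniq E by rewrite map_inj_in_uniq // fset_uniq.
have TlN : Tl != [::].
  apply: contra Tn0 => /eqP H; apply/eqP/fsetP => z; rewrite inE.
  by apply/negbTE; rewrite -[z \in T]/(z \in Tl) H.
have EN : E != [::] by rewrite /E; case: (Tl) TlN.
have [h [hlt hsum]] := hcore t0 Eu EN.
pose Dall := [seq x - y | x <- E, y <- E].
have sizeD : size Dall = (n ^ 2)%N.
  rewrite size_allpairs size_map /n; by rewrite expnS expn1.
have [g [gK gP]] : exists g : int -> nat, (forall i, (g i < n ^ 2)%N) /\
    forall i j, i - j \in Dall -> i != j -> g i != g j.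
  apply: greedy_int.
    rewrite -sizeD -(count_predC (fun d : int => d != 0) Dall) -[X in (X < _)%N]addn0 ltn_add2l.
    rewrite -has_count; apply/hasP.
    have [x xT] : exists x, x \in Tl by case: (Tl) TlN => // x s _; exists x; rewrite inE eqxx.
    exists 0 => //.
    by apply/allpairsP; exists (lm x, lm x); rewrite /= subrr map_f.
  move=> d /allpairsP [[x y] /= [xE yE ->]]; rewrite opprB; exact: allpairs_f.
have col : forall i j tau tau', tau \in T -> tau' \in T -> tau != tau' ->
    i - j = lm tau - lm tau' -> g i != g j.
  move=> i j tau tau' tT tT' ne eq; apply: gP.
    by rewrite eq; apply: allpairs_f; apply: map_f.
  apply: contra ne => /eqP ij; apply/eqP; apply: lm_inj => //.
  by apply/eqP; rewrite -subr_eq0 -eq ij subrr.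
set N := ((t - 1) * (n ^ 2))%N.
pose Aof (k : nat) : set S := if (insub k : option 'I_N) is Some o then gF o else set0.
pose idx (c r : nat) := (c * (t - 1) + r)%N.
have idx_lt : forall c r, (c < n ^ 2)%N -> (r < t - 1)%N -> (idx c r < N)%N.
  move=> c r hc hr; rewrite /idx /N; nia.
have Aof_F : forall c r, (c < n ^ 2)%N -> (r < t - 1)%N -> F (Aof (idx c r)).
  move=> c r hc hr; rewrite /Aof; case: insubP => [o _ _|]; first exact: gFF.
  by rewrite idx_lt.
have Aof_inj : forall c r c' r', (c < n ^ 2)%N -> (r < t - 1)%N ->
    (c' < n ^ 2)%N -> (r' < t - 1)%N -> Aof (idx c r) = Aof (idx c' r') ->
    c = c' /\ r = r'.
  move=> c r c' r' hc hr hc' hr'; rewrite /Aof.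
  case: insubP => [o _ vo|]; last by rewrite idx_lt.
  case: insubP => [o' _ vo'|]; last by rewrite idx_lt.
  move=> /gFi oo; move: vo vo'; rewrite oo => -> /eqP; rewrite /idx => H.
  have : (c * (t - 1) + r == c' * (t - 1) + r')%N by [].
  move=> /eqP H2; have d0 : (0 < t - 1)%N by lia.
  have e1 := congr1 (fun k => k %/ (t-1))%N H2.
  rewrite /= !divnMDl // !divn_small // !addn0 in e1.
  have e2 := congr1 (fun k => k %% (t-1))%N H2.
  by rewrite /= !modnMDl !modn_small in e2.
have hr : forall j r, (r < h j)%N -> (r < t - 1)%N.
  by move=> j r; have := hlt j; lia.
pose Q := [set B | exists p r, (r < h (lm p))%N /\
    B = translate T p `*` Aof (idx (g (lm p)) r)].
exists (\bigcup_(B in Q) B); split.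
  exists Q; split; [|split] => //.
    move=> B [p [r [hpr ->]]]; exists p, (Aof (idx (g (lm p)) r)); split => //.
    by apply: Aof_F => //; apply: hr hpr.
  move=> B1 B2 [p1 [r1 [h1 ->]]] [p2 [r2 [h2 ->]]] Hne.
  apply/seteqP; split => // [[z y]] [[H1a H1b] [H2a H2b]].
  have AA : Aof (idx (g (lm p1)) r1) = Aof (idx (g (lm p2)) r2).
    apply: contrapT => Hn; have := Fdis _ _ (Aof_F _ _ (gK _) (hr _ _ h1))
      (Aof_F _ _ (gK _) (hr _ _ h2)) Hn.
    by move=> /seteqP [/(_ y) H _]; apply: H.
  have [gg rr] := Aof_inj _ _ _ _ (gK _) (hr _ _ h1) (gK _) (hr _ _ h2) AA.
  move: H1a H2a => [tau1 tT1 e1] [tau2 tT2 e2].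
  case: (eqVneq tau1 tau2) => [et | ne].
    apply: Hne; have -> : p1 = p2 by apply: (addrI tau1); rewrite e1 et e2.
    by rewrite rr.
  have hl : lm tau1 + lm p1 = lm tau2 + lm p2 by rewrite /lm -!lamD e1 e2.
  have := col (lm p1) (lm p2) tau2 tau1 tT2 tT1 _ _.
  rewrite gg eqxx => /(_ _ _) H; exfalso; apply: notF; apply: H.
    by rewrite eq_sym.
  lia.
move=> x.
pose L := [seq (tau, r) | tau <- Tl, r <- iota 0 (h (lm x - lm tau)%R)].
have sizeL : size L = (\sum_(tau <- Tl) h (lm x - lm tau)%R)%N.
  rewrite /L; elim: (Tl) => [|a s IH] /=; first by rewrite big_nil.
  by rewrite big_cons size_cat size_map size_iota IH.
have memL : forall pr, pr \in L -> pr.1 \in T /\ (pr.2 < h (lm x - lm pr.1)%R)%N.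
  move=> pr /allpairsPdep [tau [r [tT rI ->]]] /=; split => //.
  by move: rI; rewrite mem_iota.
have Lu : uniq L.
  apply: allpairs_uniq_dep; first exact: fset_uniq.
    by move=> tau _; apply: iota_uniq.
  by move=> [u1 u2] [v1 v2] _ _ /= [e1 e2]; subst.
exists (size L); split.
  by rewrite sizeL -(big_map lm xpredT (fun e => h (lm x - e))) hsum.
pose f (i : 'I_(size L)) := let pr := nth (0, 0%N) L i in
  Aof (idx (g (lm x - lm pr.1)) pr.2).
exists f; split; [|split].
- move=> i j; rewrite /f.
  have [Ti hi] := memL _ (mem_nth (0, 0%N) (ltn_ord i)).
  have [Tj hj] := memL _ (mem_nth (0, 0%N) (ltn_ord j)).
  move=> E'; have [gg rr] := Aof_inj _ _ _ _ (gK _) (hr _ _ hi) (gK _) (hr _ _ hj) E'.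
  apply: val_inj => /=; apply/eqP; rewrite -(nth_uniq (0, 0%N) _ _ Lu) //.
  case: (eqVneq (nth (0, 0%N) L i).1 (nth (0, 0%N) L j).1) => [e1|ne].
    by rewrite [nth _ _ i]surjective_pairing [nth _ _ j]surjective_pairing e1 rr.
  have := col (lm x - lm (nth (0, 0%N) L i).1) (lm x - lm (nth (0, 0%N) L j).1) _ _ Tj Ti.
  rewrite gg eqxx => /(_ _ _) H.
  exfalso; apply: notF; apply: H; first by rewrite eq_sym.
  ring.
- by move=> i; rewrite /f; have [Ti hi] := memL _ (mem_nth (0, 0%N) (ltn_ord i));
    apply: Aof_F; [exact: gK | exact: hr hi].
- apply/seteqP; split => y /=.
    move=> [B [p [r [hpr ->]]]] [[tau tT e] Hy].
    move: e => /= e.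
    have lp : lm p = lm x - lm tau by rewrite -e /lm lamD; ring.
    have inL : (tau, r) \in L.
      by apply/allpairsPdep; exists tau, r; rewrite mem_iota -lp.
    have iL : (index (tau, r) L < size L)%N by rewrite index_mem.
    exists (Ordinal iL) => //.
    by rewrite /f /= nth_index //= -lp.
  move=> [i _ Hy].
  have [Ti hi] := memL _ (mem_nth (0, 0%N) (ltn_ord i)).
  set pr := nth (0, 0%N) L i in Ti hi Hy.
  exists (translate T (x - pr.1) `*` Aof (idx (g (lm (x - pr.1))) pr.2)).
    by exists (x - pr.1), pr.2; rewrite /lm lamB; split.
  split; last by rewrite /lm lamB.
  by exists pr.1 => //; rewrite addrC subrK.
Qed.
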